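(* Let the labels $\{1,\dots,k\}$ be partitioned into $b\ge2$ blocks all of size $s=k/b\ge2$, let $L_{01}(i,j)=[i\ne j]$, $L_{01,b}(i,j)=[i\text{ and }j\text{ not in the same block}]$, and for $0\le\eta\le1$ let $L_{01,b,\eta}=\eta L_{01}+(1-\eta)L_{01,b}$, with quadratic surrogate $\Phi_{quad}(f,y)=\frac1{2k}\|f+L_{01,b,\eta}(:,y)\|_2^2$. If the scores are constrained to be equal inside the blocks, i.e. to lie in $\mathcal{F}_{01,b}=\mathrm{span}(L_{01,b})$, then $$H_{\Phi_{quad},L_{01,b,\eta},\mathcal{F}_{01,b}}(\varepsilon)=\begin{cases}\dfrac{(\varepsilon-\frac\eta2)^2}{4b}\cdot\dfrac{(\frac{\eta b}{k}+1-\eta)^2}{(1-\frac\eta2)^2}, & \frac\eta2\le\varepsilon\le1,\\[2mm] 0, & 0\le\varepsilon\le\frac\eta2,\end{cases}$$ so the surrogate is consistent up to level $\frac\eta2$.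
   Context: $\mathrm{span}(L)$ is the column space. $\mathrm{pred}(f)$ is the smallest index maximizing $f_c$. For $q\in\Delta_k$: $\ell(f,q)=\sum_cq_cL(\mathrm{pred}(f),c)$, $\phi(f,q)=\sum_cq_c\Phi(f,c)$, $\delta\ell(f,q)=\ell(f,q)-\inf_{\hat f\in\mathcal{F}}\ell(\hat f,q)$, $\delta\phi(f,q)=\phi(f,q)-\inf_{\hat f\in\mathcal{F}}\phi(\hat f,q)$; calibration function $H_{\Phi,L,\mathcal{F}}(\varepsilon)=\inf\{\delta\phi(f,q):f\in\mathcal{F},q\in\Delta_k,\delta\ell(f,q)\ge\varepsilon\}$ ($+\infty$ if empty). A surrogate is consistent up to level $\eta'\ge0$ if $H(\varepsilon)>0$ for all $\varepsilon>\eta'$ and $H(\hat\varepsilon)$ is finite for some $\hat\varepsilon>\eta'$. *)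

(* Defs.v *)
From HB Require Import structures.
From mathcomp Require Import all_boot all_order all_algebra.
From mathcomp Require Import all_classical all_reals.
From mathcomp Require Import ereal.
Set Implicit Arguments. Unset Strict Implicit. Unset Printing Implicit Defensive.
Import Order.TTheory GRing.Theory Num.Theory.
Local Open Scope ring_scope.
Local Open Scope classical_set_scope.

(* Labels are 'I_k; a loss is a k x k matrix given as a function L i j
   (i = prediction, j = true label); scores are functions f : 'I_k -> R. *)

Definition loss01 (R : realType) (k : nat) (i j : 'I_k) : R := (i != j)%:R.

Definition loss01b (R : realType) (b s : nat) (i j : 'I_(b * s)) : R :=
  ((i %/ s)%N != (j %/ s)%N)%:R.

Definition loss01beta (R : realType) (b s : nat) (eta : R) (i j : 'I_(b * s)) : R :=
  eta * loss01 R i j + (1 - eta) * @loss01b R b s i j.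

Definition colspan (R : realType) (k : nat) (L : 'I_k -> 'I_k -> R)
  : set ('I_k -> R) :=
  [set f | exists alpha : 'I_k -> R, forall c, f c = \sum_(j < k) L c j * alpha j].

Definition simplex (R : realType) (k : nat) : set ('I_k -> R) :=
  [set q | (forall c, 0 <= q c) /\ \sum_(c < k) q c = 1].

(* pred(f): smallest index maximizing f (None only if k = 0) *)
Definition predf (R : realType) (k : nat) (f : 'I_k -> R) : option 'I_k :=
  [pick i | [forall j, (f j < f i) || ((f j == f i) && (nat_of_ord i <= nat_of_ord j)%N)]].

Definition task_risk (R : realType) (k : nat) (L : 'I_k -> 'I_k -> R)
  (f q : 'I_k -> R) : R :=
  if predf f is Some i then \sum_(c < k) q c * L i c else 0.

Definition surr_risk (R : realType) (k : nat) (Phi : ('I_k -> R) -> 'I_k -> R)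
  (f q : 'I_k -> R) : R :=
  \sum_(c < k) q c * Phi f c.

Definition excess (R : realType) (k : nat)
  (risk : ('I_k -> R) -> ('I_k -> R) -> R) (F : set ('I_k -> R))
  (f q : 'I_k -> R) : R :=
  risk f q - inf [set risk g q | g in F].

(* calibration function H_{Phi,L,F}(eps), +oo if the set is empty *)
Definition calib (R : realType) (k : nat) (Phi : ('I_k -> R) -> 'I_k -> R)
  (L : 'I_k -> 'I_k -> R) (F : set ('I_k -> R)) (eps : R) : \bar R :=
  ereal_inf [set x : \bar R | exists f q, F f /\ simplex q /\
     eps <= excess (task_risk L) F f q /\
     x = (excess (surr_risk Phi) F f q)%:E].

Definition consistent_up_to (R : realType) (H : R -> \bar R) (eta' : R) : Prop :=
  (forall eps, eta' < eps -> (0 < H eps)%E) /\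
  (exists eps, eta' < eps /\ H eps \is a fin_num).

Definition Phi_quad (R : realType) (k : nat) (L : 'I_k -> 'I_k -> R)
  (f : 'I_k -> R) (y : 'I_k) : R :=
  (2 * k%:R)^-1 * \sum_(c < k) (f c + L c y) ^+ 2.

(* Main.v *)
Require Import Defs.
From HB Require Import structures.
From mathcomp Require Import all_boot all_order all_algebra.
From mathcomp Require Import all_classical all_reals.
From mathcomp Require Import ereal.
From mathcomp Require Import ring lra zify.
Import Order.TTheory GRing.Theory Num.Theory.
Local Open Scope ring_scope.
Set Implicit Arguments. Unset Strict Implicit.

Lemma sum_regroup (F : nat -> nat) n m :
  (\sum_(j < n * m) F j = \sum_(B < n) \sum_(t < m) F (B * m + t))%N.
Proof.
elim: n => [|n IH]; first by rewrite mul0n !big_ord0.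
rewrite mulSnr big_split_ord /= IH big_ord_recr /=.
by congr (_ + _)%N; apply: eq_bigr => t _; rewrite addnC.
Qed.

Lemma count_blk_nat b s B : (0 < s)%N -> (B < b)%N ->
  (\sum_(j < b * s) ((j %/ s)%N == B) = s)%N.
Proof.
move=> s0 Bb.
rewrite (sum_regroup (fun j => nat_of_bool ((j %/ s)%N == B))).
rewrite (bigD1 (Ordinal Bb)) //=.
have -> : (\sum_(t < s) ((B * s + t) %/ s == B)%N = s)%N.
  rewrite (eq_bigr (fun _ => 1%N)) ?sum_nat_const ?card_ord ?muln1 //.
  by move=> t _; rewrite divnMDl // divn_small // addn0 eqxx.
rewrite big1 ?addn0 // => j /negPf jB; rewrite big1 // => t _.
rewrite divnMDl // divn_small // addn0.
by move: jB; rewrite -val_eqE /= => ->.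
Qed.

Lemma sum_pred1R (R : realType) n (h : 'I_n -> R) (i : 'I_n) :
  \sum_(y < n) (y == i)%:R * h y = h i.
Proof.
rewrite (bigD1 i) //= eqxx mul1r big1 ?addr0 // => c /negPf ->.
by rewrite mul0r.
Qed.

Lemma inf_min (R : realType) (A : set R) x : A x -> (forall y, A y -> x <= y) -> inf A = x.
Proof.
move=> Ax lb; apply/le_anti/andP; split.
  by apply: (ge_inf _ Ax); exists x => y /lb.
by apply: lb_le_inf; [exists x | move=> y /lb].
Qed.

Section Prop17.
Variables (R : realType) (b s : nat) (eta : R).
Hypotheses (hb : (2 <= b)%N) (hs : (2 <= s)%N) (he0 : 0 <= eta) (he1 : eta <= 1).
Local Notation k := (b * s)%N.
Local Notation L := (@loss01beta R b s eta).
Local Notation F := (colspan (@loss01b R b s)).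

Definition bconst (f : 'I_k -> R) :=
  forall i j : 'I_k, (i %/ s)%N = (j %/ s)%N -> f i = f j.

Lemma s_gt0 : (0 < s)%N. Proof. by apply: leq_trans hs. Qed.
Lemma b_gt0 : (0 < b)%N. Proof. by apply: leq_trans hb. Qed.

Lemma blk_lt (i : 'I_k) : (i %/ s < b)%N.
Proof. by rewrite ltn_divLR ?s_gt0. Qed.

Lemma count_blk (B : nat) : (B < b)%N ->
  \sum_(j < k) (((j %/ s)%N == B)%:R : R) = s%:R.
Proof. by move=> Bb; rewrite -natr_sum count_blk_nat ?s_gt0. Qed.

Lemma sum_blk (h : 'I_k -> R) (i : 'I_k) : bconst h ->
  \sum_(c < k) ((c %/ s)%N == (i %/ s)%N)%:R * h c = s%:R * h i.
Proof.
move=> hc.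
transitivity (\sum_(c < k) ((c %/ s)%N == (i %/ s)%N)%:R * h i).
  by apply: eq_bigr => c _; case: eqP => [/hc -> //|_]; rewrite !mul0r.
by rewrite -mulr_suml count_blk ?blk_lt.
Qed.

Lemma colspan_bconst f : F f -> bconst f.
Proof.
move=> [a fa] i j ij; rewrite !fa; apply: eq_bigr => c _.
by rewrite /loss01b ij.
Qed.

Lemma bconst_colspan f : bconst f -> F f.
Proof.
move=> hf.
pose T := (\sum_(j < k) f j) / s%:R / (b%:R - 1).
pose a := fun j : 'I_k => (T - f j) / s%:R.
have ha : bconst a by move=> i j /hf; rewrite /a => ->.
have sP : (s%:R : R) != 0 by rewrite pnatr_eq0 -lt0n s_gt0.
have bP : (b%:R - 1 : R) != 0.
  by rewrite subr_eq0 pnatr_eq1; case: b hb => [|[|]].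
exists a => c.
rewrite (eq_bigr (fun j => a j - ((j %/ s)%N == (c %/ s)%N)%:R * a j)); last first.
  by move=> j _; rewrite /loss01b eq_sym; case: eqP => _; rewrite ?mul1r ?mul0r ?subr0 ?subrr.
rewrite sumrB sum_blk // /a -mulr_suml sumrB sumr_const card_ord.
rewrite /T -[_ *+ k]mulr_natr natrM.
field; rewrite sP bP //.
Qed.

Definition Qb (q : 'I_k -> R) (B : nat) := \sum_(y < k) ((y %/ s)%N == B)%:R * q y.

Lemma taskL q (i : 'I_k) : \sum_(c < k) q c = 1 ->
  \sum_(c < k) q c * L i c = eta * (1 - q i) + (1 - eta) * (1 - Qb q (i %/ s)%N).
Proof.
move=> q1.
rewrite (eq_bigr (fun c => eta * (q c - (c == i)%:R * q c) +
   (1 - eta) * (q c - ((c %/ s)%N == (i %/ s)%N)%:R * q c))); last first.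
  move=> c _; rewrite /loss01beta /loss01 /loss01b (eq_sym i) (eq_sym (i %/ s)%N).
  by case: eqP => _; case: eqP => _ /=; ring.
by rewrite big_split /= -!mulr_sumr !sumrB sum_pred1R q1.
Qed.

Lemma predf_spec (f : 'I_k -> R) i : predf f = Some i ->
  forall j, f j <= f i /\ (f j = f i -> (i <= j)%N).
Proof.
rewrite /predf; case: pickP => // i' /forallP H [<-] j.
case/orP: (H j) => [lt|/andP[/eqP -> ->]]; last by [].
by split; [apply: ltW | move=> e; move: lt; rewrite e ltxx].
Qed.

Lemma predf_some (f : 'I_k -> R) i :
  (forall j, f j < f i \/ (f j = f i /\ (i <= j)%N)) -> predf f = Some i.
Proof.
move=> H; rewrite /predf; case: pickP => [i' /forallP H'|].
  congr Some; case/orP: (H' i) => [lt1|/andP[/eqP e1 l1]];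
  case: (H i') => [lt2|[e2 l2]].
  - by move: (lt_trans lt1 lt2); rewrite ltxx.
  - by move: lt1; rewrite e2 ltxx.
  - by move: lt2; rewrite e1 ltxx.
  - by apply/val_inj/anti_leq; rewrite l1 l2.
move/(_ i)/forallP; case => j; apply/orP.
by case: (H j) => [->|[e ->]]; [left | right; rewrite e eqxx].
Qed.

Lemma predf_exists (f : 'I_k -> R) : exists i, predf f = Some i.
Proof.
have k0 : (0 < k)%N by rewrite muln_gt0 s_gt0 b_gt0.
pose i0 : 'I_k := Ordinal k0.
case: (@Order.TotalTheory.arg_maxP _ _ _ i0 xpredT f erefl) => i1 _ M.
have P1 : (fun j => f j == f i1) i1 by rewrite /= eqxx.
case: (@Order.TotalTheory.arg_minP _ _ _ i1 (fun j => f j == f i1) (fun j : 'I_k => nat_of_ord j) P1) => i /eqP fi Mi.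
exists i; apply: predf_some => j.
have : f j <= f i by rewrite fi; exact: (M j erefl).
rewrite le_eqVlt => /orP[/eqP e|->]; last by left.
by right; split => //; have := Mi j; rewrite e fi eqxx; apply.
Qed.

Lemma pred_first (f : 'I_k -> R) i : bconst f -> predf f = Some i -> (i %% s = 0)%N.
Proof.
move=> hf /predf_spec H.
have lt : (i - i %% s < k)%N by apply: leq_ltn_trans (leq_subr _ _) (ltn_ord i).
pose i' : 'I_k := Ordinal lt.
have e : (i - i %% s = i %/ s * s)%N by rewrite {1}(divn_eq i s) addnK.
have : f i' = f i by apply: hf; rewrite /= e mulnK ?s_gt0.
case: (H i') => _ /[apply] /=.
have := leq_mod i s; lia.
Qed.

Definition vq (q : 'I_k -> R) (c : 'I_k) := \sum_(y < k) q y * L c y.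
Definition alpha : R := eta / s%:R + 1 - eta.
Definition f0 (q : 'I_k -> R) (c : 'I_k) := alpha * Qb q (c %/ s)%N - 1.
Local Notation Phi := (Phi_quad L).

Lemma surr_eq q f : \sum_(c < k) q c = 1 ->
  surr_risk Phi f q = (2 * k%:R)^-1 *
    \sum_(c < k) ((f c + vq q c) ^+ 2 + (\sum_(y < k) q y * L c y ^+ 2 - vq q c ^+ 2)).
Proof.
move=> q1; rewrite /surr_risk /Phi_quad.
under eq_bigr do rewrite mulrCA.
rewrite -mulr_sumr; congr (_ * _).
under eq_bigr do rewrite mulr_sumr.
rewrite exchange_big /=; apply: eq_bigr => c _.
rewrite (eq_bigr (fun y => q y * f c ^+ 2 + (2 * f c) * (q y * L c y) + q y * L c y ^+ 2)); last first.
  by move=> y _; ring.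
rewrite !big_split /= -mulr_suml -mulr_sumr q1 /vq; ring.
Qed.

Lemma surr_diff q f g : \sum_(c < k) q c = 1 ->
  surr_risk Phi f q - surr_risk Phi g q = (2 * k%:R)^-1 *
    \sum_(c < k) ((f c + vq q c) ^+ 2 - (g c + vq q c) ^+ 2).
Proof.
move=> q1; rewrite !surr_eq // -mulrBr -sumrB; congr (_ * _).
by apply: eq_bigr => c _; ring.
Qed.

Lemma f0_bconst q : bconst (f0 q).
Proof. by move=> i j e; rewrite /f0 e. Qed.

Lemma orth q h : \sum_(c < k) q c = 1 -> bconst h ->
  \sum_(c < k) h c * (f0 q c + vq q c) = 0.
Proof.
move=> q1 hh.
have sP : (s%:R : R) != 0 by rewrite pnatr_eq0 -lt0n s_gt0.
rewrite (eq_bigr (fun c => eta / s%:R * (h c * Qb q (c %/ s)%N) - eta * (h c * q c))); last first.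
  by move=> c _; rewrite /f0 /vq taskL // /alpha; ring.
rewrite sumrB -!mulr_sumr.
have -> : \sum_(c < k) h c * Qb q (c %/ s)%N = s%:R * \sum_(c < k) h c * q c.
  rewrite /Qb; under eq_bigr do rewrite mulr_sumr.
  rewrite exchange_big /= mulr_sumr; apply: eq_bigr => y _.
  rewrite (eq_bigr (fun c : 'I_k => ((c %/ s)%N == (y %/ s)%N)%:R * h c * q y)); last first.
    by move=> c _; rewrite eq_sym; ring.
  by rewrite -mulr_suml sum_blk //; ring.
by field.
Qed.

Lemma pyth q f : \sum_(c < k) q c = 1 -> bconst f ->
  surr_risk Phi f q - surr_risk Phi (f0 q) q =
  (2 * k%:R)^-1 * \sum_(c < k) (f c - f0 q c) ^+ 2.
Proof.
move=> q1 hf; rewrite surr_diff //; congr (_ * _).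
have hh : bconst (fun c => f c - f0 q c).
  by move=> i j e; rewrite (hf _ _ e) (@f0_bconst q _ _ e).
rewrite (eq_bigr (fun c => (f c - f0 q c) ^+ 2 + 2 * ((f c - f0 q c) * (f0 q c + vq q c)))); last first.
  by move=> c _; ring.
by rewrite big_split /= -mulr_sumr orth // mulr0 addr0.
Qed.

Lemma k_gt0 : (0 < k)%N. Proof. by rewrite muln_gt0 s_gt0 b_gt0. Qed.

Lemma surr_excess q f : simplex q -> F f ->
  excess (surr_risk Phi) F f q = (2 * k%:R)^-1 * \sum_(c < k) (f c - f0 q c) ^+ 2.
Proof.
move=> [q0 q1] /colspan_bconst hf.
rewrite /excess (@inf_min _ _ (surr_risk Phi (f0 q) q)).
- exact: pyth.
- by exists (f0 q) => //; apply/bconst_colspan/f0_bconst.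
move=> y [g /colspan_bconst hg <-].
rewrite -subr_ge0 pyth //; apply: mulr_ge0.
  by rewrite invr_ge0 mulr_ge0 // ler0n.
by apply: sumr_ge0 => c _; apply: sqr_ge0.
Qed.

Definition ell (q : 'I_k -> R) (i : 'I_k) := \sum_(c < k) q c * L i c.

Lemma task_pred f q i : predf f = Some i -> task_risk L f q = ell q i.
Proof. by rewrite /task_risk => ->. Qed.

Lemma task_inf_lb q : exists j : 'I_k, (j %% s = 0)%N /\
  forall g, F g -> ell q j <= task_risk L g q.
Proof.
pose i0 : 'I_k := Ordinal k_gt0.
pose P : {pred 'I_k} := fun j : 'I_k => (j %% s)%N == 0%N.
have P0 : P i0 by rewrite /P /= mod0n.
case: (@Order.TotalTheory.arg_minP _ _ _ i0 P (ell q) P0) => j /eqP j0 Mj.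
exists j; split => // g /colspan_bconst hg.
have [i ei] := predf_exists g.
rewrite (task_pred _ ei); apply: Mj; apply/eqP; exact: pred_first hg ei.
Qed.

Lemma task_excess_ub q f i j : F f -> predf f = Some i ->
  (forall g, F g -> ell q j <= task_risk L g q) ->
  excess (task_risk L) F f q <= ell q i - ell q j.
Proof.
move=> Ff ei Mj; rewrite /excess {1}(task_pred _ ei); apply: lerB => //.
apply: lb_le_inf; first by exists (task_risk L f q), f.
by move=> y [g Fg <-]; apply: Mj.
Qed.

Lemma task_excess_lb q f g : F f -> F g ->
  task_risk L f q - task_risk L g q <= excess (task_risk L) F f q.
Proof.
move=> Ff Fg; rewrite /excess; apply: lerB => //.
have [j [_ Mj]] := task_inf_lb q.
apply: (ge_inf _); last by exists g.
by exists (ell q j) => y [h Fh <-]; apply: Mj.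
Qed.

Lemma alpha_ge0 : 0 <= alpha.
Proof. by rewrite /alpha -addrA addr_ge0 ?divr_ge0 ?ler0n ?subr_ge0. Qed.

Lemma LB q f : simplex q -> F f -> exists d : R, d <= 1 /\
  excess (task_risk L) F f q <= eta / 2 + (1 - eta / 2) * d /\
  (0 <= d -> alpha ^+ 2 * d ^+ 2 / (4 * b%:R) <= excess (surr_risk Phi) F f q) /\
  0 <= excess (surr_risk Phi) F f q.
Proof.
move=> Sq Ff; have [q0 q1] := Sq.
have hf := colspan_bconst Ff.
have [i ei] := predf_exists f.
have i0 := pred_first hf ei.
have [j [j0 Mj]] := task_inf_lb q.
have ub := task_excess_ub Ff ei Mj.
rewrite surr_excess //.
have kpos : 0 < (2 * k%:R : R) by rewrite mulr_gt0 // ltr0n k_gt0.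
have sq0 : 0 <= (2 * k%:R)^-1 * \sum_(c < k) (f c - f0 q c) ^+ 2.
  apply: mulr_ge0; first by rewrite invr_ge0 ltW.
  by apply: sumr_ge0 => c _; apply: sqr_ge0.
have Qge0 B : 0 <= Qb q B by apply: sumr_ge0 => c _; rewrite mulr_ge0 ?ler0n.
have Qle1 B : Qb q B <= 1.
  rewrite -q1; apply: ler_sum => c _; case: eqP => _; rewrite ?mul1r ?mul0r //.
have qle (l : 'I_k) B : (l %/ s)%N = B -> q l <= Qb q B.
  move=> e; rewrite /Qb (bigD1 l) //= e eqxx mul1r lerDl.
  by apply: sumr_ge0 => c _; rewrite mulr_ge0 ?ler0n.
case: (eqVneq (i %/ s)%N (j %/ s)%N) => eij.
  have ij : i = j.
    by apply: val_inj; rewrite /= (divn_eq i s) (divn_eq j s) i0 j0 eij.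
  exists 0; split; first exact: ler01.
  split; first by apply: le_trans ub _; rewrite ij subrr mulr0 addr0 divr_ge0.
  by split => // _; rewrite expr0n /= mulr0 mul0r.
have QIJ : Qb q (i %/ s)%N + Qb q (j %/ s)%N <= 1.
  rewrite -q1 /Qb -big_split; apply: ler_sum => c _ /=; rewrite -mulrDl.
  case: eqP => e1; case: eqP => e2 /=.
  - by move: eij; rewrite -e1 -e2 eqxx.
  - by rewrite addr0 mul1r.
  - by rewrite add0r mul1r.
  - by rewrite addr0 mul0r.
exists (Qb q (j %/ s)%N - Qb q (i %/ s)%N).
have := Qge0 (i %/ s)%N; have := Qge0 (j %/ s)%N; have := Qle1 (j %/ s)%N.
move=> h1 h2 h3.
split; first by lra.
split.
  apply: le_trans ub _; rewrite /ell !taskL //.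
  have qi0 := q0 i; have qj := qle j _ erefl.
  have p1 : 0 <= eta * (Qb q (j %/ s)%N - q j + q i) by rewrite mulr_ge0 //; lra.
  have p2 : 0 <= eta * (1 - Qb q (j %/ s)%N - Qb q (i %/ s)%N) by rewrite mulr_ge0 //; lra.
  nra.
split => // d0.
set x := f i - f0 q i; set y := f j - f0 q j.
have hh : bconst (fun c => (f c - f0 q c) ^+ 2).
  by move=> i' j' e; rewrite (hf _ _ e) (@f0_bconst q _ _ e).
have key : s%:R * x ^+ 2 + s%:R * y ^+ 2 <= \sum_(c < k) (f c - f0 q c) ^+ 2.
  rewrite -(sum_blk i hh) -(sum_blk j hh) -big_split; apply: ler_sum => c _ /=.
  rewrite -mulrDl; have := sqr_ge0 (f c - f0 q c).
  case: eqP => e1; case: eqP => e2 /=.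
  - by move: eij; rewrite -e1 -e2 eqxx.
  - by rewrite addr0 mul1r.
  - by rewrite add0r mul1r.
  - by rewrite addr0 mul0r.
have fji : f j <= f i := (predf_spec ei j).1.
have ha := alpha_ge0.
have xy : alpha * (Qb q (j %/ s)%N - Qb q (i %/ s)%N) <= x - y.
  rewrite /x /y /f0; nra.
set d := Qb q (j %/ s)%N - Qb q (i %/ s)%N in xy d0 *.
have ad0 : 0 <= alpha * d by rewrite mulr_ge0.
have sq2 : alpha ^+ 2 * d ^+ 2 <= 2 * (x ^+ 2 + y ^+ 2).
  have := sqr_ge0 (x + y); nra.
apply: le_trans (_ : _ <= (2 * k%:R)^-1 * (s%:R * x ^+ 2 + s%:R * y ^+ 2)) _; last first.
  by apply: ler_wpM2l => //; rewrite invr_ge0 ltW.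
have bP : (b%:R : R) != 0 by rewrite pnatr_eq0 -lt0n b_gt0.
have sP : (s%:R : R) != 0 by rewrite pnatr_eq0 -lt0n s_gt0.
have -> : (2 * k%:R)^-1 * (s%:R * x ^+ 2 + s%:R * y ^+ 2) = (x ^+ 2 + y ^+ 2) * (2 * b%:R)^-1.
  by rewrite natrM; field; rewrite bP sP.
have -> : alpha ^+ 2 * d ^+ 2 / (4 * b%:R) = (alpha ^+ 2 * d ^+ 2 / 2) * (2 * b%:R)^-1.
  by field; rewrite bP.
apply: ler_wpM2r; first by rewrite invr_ge0 mulr_ge0 ?ler0n.
lra.
Qed.

Lemma EX d : 0 <= d <= 1 -> exists f q, F f /\ simplex q /\
  eta / 2 + (1 - eta / 2) * d <= excess (task_risk L) F f q /\
  excess (surr_risk Phi) F f q = alpha ^+ 2 * d ^+ 2 / (4 * b%:R).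
Proof.
move=> /andP[d0 d1].
have s1 : (1 < k)%N by apply: leq_trans hs _; rewrite leq_pmull // b_gt0.
have sk : (s < k)%N by rewrite ltn_Pmull // s_gt0.
pose i1 : 'I_k := Ordinal s1.
pose is' : 'I_k := Ordinal sk.
pose i0 : 'I_k := Ordinal k_gt0.
pose a : R := (1 - d) / 2.
pose c : R := (1 + d) / 2.
pose q := fun y : 'I_k => (y == i1)%:R * a + (y == is')%:R * c.
have Q B : Qb q B = (0 == B)%N%:R * a + (1 == B)%N%:R * c.
  rewrite /Qb /q; under eq_bigr do rewrite mulrDr.
  rewrite big_split /=.
  rewrite (eq_bigr (fun y => (y == i1)%:R * (((y %/ s)%N == B)%:R * a))); last first.
    by move=> y _; ring.
  rewrite sum_pred1R.
  rewrite (eq_bigr (fun y => (y == is')%:R * (((y %/ s)%N == B)%:R * c))); last first.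
    by move=> y _; ring.
  by rewrite sum_pred1R /= divn_small // divnn s_gt0.
have a0 : 0 <= a by rewrite /a; lra.
have c0 : 0 <= c by rewrite /c; lra.
have Sq : simplex q.
  split.
    by move=> y; rewrite /q addr_ge0 // mulr_ge0 // ler0n.
  rewrite /q big_split /=.
  rewrite (sum_pred1R (fun _ => a)) (sum_pred1R (fun _ => c)) /a /c; lra.
pose f := fun y : 'I_k => if ((y %/ s)%N <= 1)%N then alpha / 2 - 1 else -1.
have hf : bconst f by move=> i j e; rewrite /f e.
have Ff := bconst_colspan hf.
pose g := fun y : 'I_k => (((y %/ s)%N == 1%N)%:R : R).
have hg : bconst g by move=> i j e; rewrite /g e.
have Fg := bconst_colspan hg.
have ha := alpha_ge0.
have pf : predf f = Some i0.
  apply: predf_some => j.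
  have : f j <= f i0.
    rewrite /f /= div0n leq0n; case: ifP => _ //; lra.
  by rewrite le_eqVlt => /orP[/eqP ->|->]; [right | left].
have pg : predf g = Some is'.
  apply: predf_some => j; rewrite /g /= divnn s_gt0 eqxx.
  case: eqP => e; last by left; rewrite ltr01.
  right; split => //; apply: (@leq_trans (1 * s)); first by rewrite mul1n.
  by rewrite -leq_divRL ?s_gt0 // e.
have qi0 : q i0 = 0.
  rewrite /q; have -> : (i0 == i1) = false by rewrite -val_eqE.
  have -> : (i0 == is') = false by rewrite -val_eqE /=; case: s hs.
  by rewrite !mul0r addr0.
have qis : q is' = c.
  rewrite /q; have -> : (is' == i1) = false by rewrite -val_eqE /=; case: s hs => [|[|]].
  by rewrite eqxx mul0r mul1r add0r.
exists f, q; split => //; split => //; split.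
  apply: le_trans (task_excess_lb _ Ff Fg).
  rewrite (task_pred _ pf) (task_pred _ pg) /ell !taskL; try by case: Sq.
  rewrite qi0 qis !Q /= div0n divnn s_gt0 /a /c.
  rewrite /=; nra.
rewrite surr_excess //.
rewrite (eq_bigr (fun y : 'I_k => (((y %/ s)%N == 0%N)%:R + ((y %/ s)%N == 1%N)%:R) * (alpha * d / 2) ^+ 2)); last first.
  move=> y _; rewrite /f /f0 !Q.
  case: (y %/ s)%N => [|[|n]] /=; rewrite /a /c; ring.
rewrite -mulr_suml big_split /= !count_blk ?b_gt0 //.
have bP : (b%:R : R) != 0 by rewrite pnatr_eq0 -lt0n b_gt0.
have sP : (s%:R : R) != 0 by rewrite pnatr_eq0 -lt0n s_gt0.
by rewrite natrM; field; rewrite bP sP.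
Qed.

Local Notation H := (calib Phi L F).

Lemma alphaE : eta * b%:R / k%:R + 1 - eta = alpha.
Proof.
have bP : (b%:R : R) != 0 by rewrite pnatr_eq0 -lt0n b_gt0.
have sP : (s%:R : R) != 0 by rewrite pnatr_eq0 -lt0n s_gt0.
by rewrite /alpha natrM; field; rewrite bP sP.
Qed.

Lemma clause1 eps : eta / 2 <= eps <= 1 ->
  H eps = ((eps - eta / 2) ^+ 2 / (4 * b%:R)
              * ((eta * b%:R / k%:R + 1 - eta) ^+ 2 / (1 - eta / 2) ^+ 2))%:E.
Proof.
move=> /andP[e0 e1]; rewrite alphaE.
have den : 0 < 1 - eta / 2 by have := he1; lra.
have den0 : 1 - eta / 2 != 0 by rewrite gt_eqF.
have bP : (b%:R : R) != 0 by rewrite pnatr_eq0 -lt0n b_gt0.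
pose d := (eps - eta / 2) / (1 - eta / 2).
have d0 : 0 <= d by rewrite /d divr_ge0 //; lra.
have d1 : d <= 1 by rewrite /d ler_pdivrMr // mul1r; lra.
have dE : eta / 2 + (1 - eta / 2) * d = eps.
  have den2 : 2 - eta != 0 by rewrite gt_eqF //; have := he1; lra.
  by rewrite /d; field.
suff -> : H eps = (alpha ^+ 2 * d ^+ 2 / (4 * b%:R))%:E.
  have den2 : 2 - eta != 0 by rewrite gt_eqF //; have := he1; lra.
  by congr EFin; rewrite /d; field; rewrite bP den2.
apply/le_anti/andP; split.
  have [f [q [Ff [Sq [ht hs']]]]] := EX (d := d) (introT andP (conj d0 d1)).
  apply: ge_ereal_inf; exists (excess (surr_risk Phi) F f q)%:E; last by rewrite hs'.
  by exists f, q; split => //; split => //; split => //; rewrite -dE.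
apply: le_ereal_inf_tmp => x [f [q [Ff [Sq [he ->]]]]]; rewrite lee_fin.
have [d' [d'1 [ub [lb _]]]] := LB Sq Ff.
have dd' : d <= d'.
  rewrite /d ler_pdivrMr //.
  have := le_trans he ub; nra.
apply: le_trans (lb (le_trans d0 dd')).
apply: ler_wpM2r; first by rewrite invr_ge0 mulr_ge0 ?ler0n.
apply: ler_wpM2l; first by apply: sqr_ge0.
nra.
Qed.

Lemma clause2 eps : 0 <= eps <= eta / 2 -> H eps = (0 : R)%:E.
Proof.
move=> /andP[e0 e1].
have z01 := introT andP (conj (lexx (0 : R)) (@ler01 R)).
apply/le_anti/andP; split.
  have [f [q [Ff [Sq [ht hs']]]]] := EX z01.
  apply: ge_ereal_inf; exists (excess (surr_risk Phi) F f q)%:E; last first.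
    by rewrite hs' expr0n /= !mulr0 mul0r.
  exists f, q; split => //; split => //; split => //.
  by apply: le_trans ht; rewrite mulr0 addr0.
apply: le_ereal_inf_tmp => x [f [q [Ff [Sq [he ->]]]]]; rewrite lee_fin.
by have [d' [_ [_ [_ ?]]]] := LB Sq Ff.
Qed.

Lemma alpha_gt0 : 0 < alpha.
Proof.
rewrite /alpha; have sP : (0 : R) < s%:R by rewrite ltr0n s_gt0.
case: (eqVneq eta 1) => [->|ne].
  by rewrite addrK mul1r invr_gt0.
have : eta < 1 by rewrite lt_neqAle ne.
have : 0 <= eta / s%:R by rewrite divr_ge0 // ltW.
lra.
Qed.

Lemma clause3 : consistent_up_to H (eta / 2).
Proof.
split.
  move=> eps lt; case: (lerP eps 1) => e1.
    rewrite clause1 ?(ltW lt) // lte_fin alphaE.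
    have den : 0 < 1 - eta / 2 by lra.
    have bpos : (0 : R) < b%:R by rewrite ltr0n b_gt0.
    apply: mulr_gt0; apply: divr_gt0.
    - by apply: exprn_gt0; lra.
    - by rewrite mulr_gt0.
    - by apply: exprn_gt0; apply: alpha_gt0.
    - by apply: exprn_gt0.
  have -> : H eps = +oo%E.
    apply/ereal_inf_pinfty => x [f [q [Ff [Sq [he _]]]]].
    have [d' [d'1 [ub _]]] := LB Sq Ff.
    exfalso; have := le_trans he ub.
    have : (1 - eta / 2) * d' <= (1 - eta / 2) by rewrite ler_piMr //; have := he1; lra.
    lra.
  by rewrite ltry.
exists 1; split; first by have := he1; lra.
by rewrite clause1 //; apply/andP; split; have := he1; lra.
Qed.

End Prop17.

Theorem proposition17 (R : realType) (b s : nat) (eta : R) :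
  (2 <= b)%N -> (2 <= s)%N -> 0 <= eta <= 1 ->
  let k := (b * s)%N in
  let H := calib (Phi_quad (@loss01beta R b s eta)) (@loss01beta R b s eta)
                 (colspan (@loss01b R b s)) in
  (forall eps : R, eta / 2 <= eps <= 1 ->
     H eps = ((eps - eta / 2) ^+ 2 / (4 * b%:R)
              * ((eta * b%:R / k%:R + 1 - eta) ^+ 2 / (1 - eta / 2) ^+ 2))%:E) /\
  (forall eps : R, 0 <= eps <= eta / 2 -> H eps = (0 : R)%:E) /\
  consistent_up_to H (eta / 2).
Proof.
move=> hb hs /andP[he0 he1] k H.
split; first exact: clause1.
split; first exact: clause2.
exact: clause3.
Qed.
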